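(* Let $a\in\mathbb{C}^*$, $s,t\ge0$ with $n=s+t\ge1$, and $A=\mathrm{diag}(a,\dots,a,-a,\dots,-a)$ with $s$ entries $a$ and $t$ entries $-a$. Then for every $B\in M_n(\mathbb{C})$ with $AB+BA=0$: (1) $\mathrm{rank}(B)\le2\min(s,t)$; (2) $(A,B)\in\mathscr{Z}_{\min(s,t),\,|s-t|,\,0}$.
   Context: For $(p,m,r)\in\mathbb{Z}_{\ge0}^3$ with $2p+m+r=n$, $\mathscr{Z}_{p,m,r}$ denotes the Zariski closure, in $\mathscr{Z}_n=\{(A,B)\in M_n(\mathbb{C})^2 : AB+BA=0\}$, of the union of the $GL_n$-orbits (simultaneous conjugation) of all pairs $(A,B)\in\mathscr{Z}_n$ with $A=\mathrm{diag}(a_1,-a_1,\dots,a_p,-a_p,a_{p+1},\dots,a_{p+m},0,\dots,0)$ ($r$ zeros), $a_i\in\mathbb{C}^*$, $a_i\ne\pm a_j$ for $i\ne j$. *)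

(* Defs.v *)
(* Complex numbers are modelled as R[i] = complex R for an
   arbitrary R : realType (a complete archimedean ordered field, i.e. the reals). *)
From HB Require Import structures.
From mathcomp Require Import all_boot all_order all_algebra.
From mathcomp Require Import reals.
From mathcomp Require Import complex.
From mathcomp Require mpoly.
Set Implicit Arguments. Unset Strict Implicit. Unset Printing Implicit Defensive.
Import Order.TTheory GRing.Theory Num.Theory.
Local Open Scope ring_scope.

Section Defs.
Variable (F : comNzRingType) (n : nat).

Definition pair_coords (P : 'M[F]_n * 'M[F]_n) : 'I_(n * n + n * n) -> F :=
  fun i => (row_mx (mxvec P.1) (mxvec P.2)) 0 i.

Definition zariski_closed (Z : 'M[F]_n * 'M[F]_n -> Prop) : Prop :=
  exists I : mpoly.mpoly (n * n + n * n) F -> Prop,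
    forall P, Z P <-> (forall p, I p -> mpoly.meval (pair_coords P) p = 0).

Definition zariski_closure (S : 'M[F]_n * 'M[F]_n -> Prop) P : Prop :=
  forall Z, zariski_closed Z -> (forall Q, S Q -> Z Q) -> Z P.

Definition Zanti (P : 'M[F]_n * 'M[F]_n) : Prop := P.1 *m P.2 + P.2 *m P.1 = 0.

End Defs.

(* Diagonal entry i (0-based) of
   diag(a_1,-a_1,...,a_p,-a_p,a_(p+1),...,a_(p+m),0,...,0),
   where a_(k+1) is written a k (0-based indexing of the a's). *)
Definition Zdiag (F : comNzRingType) (p m : nat) (a : nat -> F) (i : nat) : F :=
  if (i < 2 * p)%N then (if odd i then - a i./2 else a i./2)
  else if (i < 2 * p + m)%N then a (p + (i - 2 * p))%N
  else 0.

(* Z_{p,m,r} inside Z_n, for 2p+m+r = n: the Zariski closure (in Z_n) of the union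
   of GL_n-orbits of pairs (A,B) in Z_n with A diagonal as above,
   a_i nonzero and a_i <> +- a_j for i <> j. *)
Definition Zpmr (F : fieldType) (n p m r : nat) (P : 'M[F]_n * 'M[F]_n) : Prop :=
  (2 * p + m + r)%N = n /\
  Zanti P /\
  zariski_closure
    (fun Q : 'M[F]_n * 'M[F]_n =>
       exists (a : nat -> F) (B : 'M[F]_n) (g : 'M[F]_n),
         (forall i, (i < p + m)%N -> a i != 0) /\
         (forall i j, (i < p + m)%N -> (j < p + m)%N -> i <> j ->
            a i != a j /\ a i != - a j) /\
         Zanti (diag_mx (\row_(i < n) Zdiag p m a i), B) /\
         g \in unitmx /\
         Q = (g *m diag_mx (\row_(i < n) Zdiag p m a i) *m invmx g,
              g *m B *m invmx g))
    P.
Arguments Zpmr {F} n p m r P.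

(* Main.v *)
Require Import Defs.
Set Warnings "-notation-overridden,-ambiguous-paths,-notation-incompatible-prefix".
From HB Require Import structures.
From mathcomp Require Import all_boot all_order all_algebra.
From mathcomp Require Import reals complex.
From mathcomp Require Import mpoly.
From mathcomp Require Import ring zify.
From mathcomp Require Import fingroup perm.
From Stdlib Require Import Classical_Prop.
Import Order.TTheory GRing.Theory Num.Theory.
Local Open Scope ring_scope.
Set Implicit Arguments. Unset Strict Implicit. Unset Printing Implicit Defensive.

Ltac simp_if := repeat match goal with
  | |- context [if ?b then _ else _] =>
      (have -> : b = true by lia) || (have -> : b = false by lia)
  end.

Section Curve.
Variable F : numFieldType.

Definition cof (P : F -> Prop) := exists L : seq F, forall x, x \notin L -> P x.

Lemma cofI P Q : cof P -> cof Q -> cof (fun x => P x /\ Q x).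
Proof.
move=> [L1 H1] [L2 H2]; exists (L1 ++ L2) => x; rewrite mem_cat negb_or.
by case/andP=> /H1 ? /H2 ?.
Qed.

Lemma cof_imp (P Q : F -> Prop) : (forall x, P x -> Q x) -> cof P -> cof Q.
Proof. by move=> PQ [L H]; exists L => x /H /PQ. Qed.

Lemma cofT (P : F -> Prop) : (forall x, P x) -> cof P.
Proof. by move=> H; exists [::]. Qed.

Lemma cof_all (T : finType) (P : T -> F -> Prop) :
  (forall t, cof (P t)) -> cof (fun x => forall t, P t x).
Proof.
move=> H; have [f Hf] := fin_all_exists H.
exists (flatten [seq f t | t <- enum T]) => x xL t; apply: Hf.
apply: contra xL => xt; apply/flattenP; exists (f t) => //.
by apply/mapP; exists t; rewrite ?mem_enum.
Qed.

Lemma cof_aff (c0 c1 : F) : (c0 != 0) || (c1 != 0) ->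
  cof (fun x => c0 + x * c1 != 0).
Proof.
move=> H; exists [:: - c0 / c1] => x; rewrite inE; apply: contra => /eqP E.
have [c10|c1n0] := eqVneq c1 0.
  by move: H E; rewrite c10 eqxx orbF mulr0 addr0 => /eqP + E0; rewrite E0.
apply/eqP; apply: (mulIf c1n0); rewrite -mulrA mulVf // mulr1; apply/eqP; rewrite -addr_eq0 addrC E //.
Qed.

End Curve.
Section Curve2.
Variable F : numFieldType.

Lemma poly_cof0 (q : {poly F}) : cof (fun x => q.[x] = 0) -> q = 0.
Proof.
move=> [L H].
pose r := q * \prod_(l <- L) ('X - l%:P).
have rx x : r.[x] = 0.
  rewrite hornerM horner_prod.
  case: (boolP (x \in L)) => xL; last by rewrite H // mul0r.
  rewrite (big_rem _ xL) /= hornerD hornerN hornerX hornerC subrr mul0r mulr0 //.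
have r0 : r = 0.
  apply/eqP; apply/negPn/negP => rn0.
  have : (size [seq (k%:R : F) | k <- iota 0 (size r)] < size r)%N.
    apply: max_poly_roots rn0 _ _.
      by apply/allP => y /mapP [k _ ->]; apply/rootP.
    rewrite map_inj_uniq ?iota_uniq // => i j /eqP; rewrite eqr_nat => /eqP //.
  by rewrite size_map size_iota ltnn.
move/eqP: r0; rewrite mulf_eq0 => /orP [/eqP //|].
have pn0 : \prod_(l <- L) ('X - l%:P) != 0.
  by apply: monic_neq0; apply: monic_prod_XsubC.
by rewrite (negPf pn0).
Qed.

Lemma coordsL n (P0 P1 : 'M[F]_n * 'M[F]_n) x i :
  pair_coords (P0.1 + x *: P1.1, P0.2 + x *: P1.2) i =
  pair_coords P0 i + x * pair_coords P1 i.
Proof.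
rewrite /pair_coords /= !linearD !linearZ /=.
by rewrite !mxE; case: splitP => k _; rewrite !mxE.
Qed.

Lemma curve_Z n (Z : 'M[F]_n * 'M[F]_n -> Prop) (P0 P1 : 'M[F]_n * 'M[F]_n) :
  zariski_closed Z -> cof (fun x => Z (P0.1 + x *: P1.1, P0.2 + x *: P1.2)) ->
  Z P0.
Proof.
move=> [I HI] HC; apply/HI => p Ip.
pose c0 := pair_coords P0; pose c1 := pair_coords P1.
pose q : {poly F} := \sum_(m <- msupp p) p@_m *:
   \prod_(i < n * n + n * n) ((c0 i)%:P + c1 i *: 'X) ^+ m i.
have qx x : q.[x] = p.@[pair_coords (P0.1 + x *: P1.1, P0.2 + x *: P1.2)].
  rewrite mevalE horner_sum; apply: eq_bigr => m _.
  rewrite hornerZ horner_prod; congr (_ * _); apply: eq_bigr => i _.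
  by rewrite coordsL !hornerE [x * _]mulrC.
have q0 : q = 0.
  apply: poly_cof0; apply: cof_imp HC => x Zx.
  by rewrite qx; move/HI: Zx => /(_ p Ip).
have := qx 0; rewrite q0 horner0 => ->.
by rewrite !scale0r !addr0 -surjective_pairing.
Qed.

Lemma curve_cl n (S : 'M[F]_n * 'M[F]_n -> Prop) (P0 P1 : 'M[F]_n * 'M[F]_n) :
  cof (fun x => zariski_closure S (P0.1 + x *: P1.1, P0.2 + x *: P1.2)) ->
  zariski_closure S P0.
Proof.
move=> HC Z HZ HS; have HZ2 := HZ; apply: (curve_Z (P1 := P1) HZ2).
by apply: cof_imp HC => x /(_ Z HZ HS).
Qed.

End Curve2.
Definition Sgen (F : fieldType) (n p m : nat) (Q : 'M[F]_n * 'M[F]_n) : Prop :=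
       exists (a : nat -> F) (B : 'M[F]_n) (g : 'M[F]_n),
         (forall i, (i < p + m)%N -> a i != 0) /\
         (forall i j, (i < p + m)%N -> (j < p + m)%N -> i <> j ->
            a i != a j /\ a i != - a j) /\
         Zanti (diag_mx (\row_(i < n) Zdiag p m a i), B) /\
         g \in unitmx /\
         Q = (g *m diag_mx (\row_(i < n) Zdiag p m a i) *m invmx g,
              g *m B *m invmx g).
Arguments Sgen {F} n p m Q.

Section Lin.
Variables (F : fieldType) (n : nat).
Local Notation N := (n * n + n * n)%N.

Lemma cl_lin (S1 S2 : 'M[F]_n * 'M[F]_n -> Prop) (phi : 'M[F]_n * 'M[F]_n -> 'M[F]_n * 'M[F]_n)
  (M : 'M[F]_N) :
  (forall P i, pair_coords (phi P) i = ((\row_j pair_coords P j) *m M) 0 i) ->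
  (forall Q, S1 Q -> S2 (phi Q)) ->
  forall P, zariski_closure S1 P -> zariski_closure S2 (phi P).
Proof.
move=> HM HS P HP Z [I HI] HZ.
pose lq : N.-tuple {mpoly F[N]} := [tuple \sum_(j < N) M j i *: 'X_j | i < N].
have key Q p : (p \mPo lq).@[pair_coords Q] = p.@[pair_coords (phi Q)].
  rewrite comp_mpoly_meval; apply: meval_eq => i.
  rewrite tnth_mktuple HM mxE raddf_sum /=; apply: eq_bigr => j _.
  by rewrite mevalZ mevalXU mxE mulrC.
apply: (HP (fun Q => Z (phi Q))); last by move=> Q /HS /HZ.
exists (fun p' => exists2 p, I p & p' = p \mPo lq) => Q; split.
  by move/HI => H _ [p Ip ->]; rewrite key; apply: H.
by move=> H; apply/HI => p Ip; rewrite -key; apply: H; exists p.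
Qed.

Definition conjrow (g : 'M[F]_n) (v : 'rV[F]_N) : 'rV[F]_N :=
  row_mx (mxvec (g *m vec_mx (lsubmx v) *m invmx g))
         (mxvec (g *m vec_mx (rsubmx v) *m invmx g)).

Fact conjrow_lin g : linear (conjrow g).
Proof.
move=> c u v; rewrite /conjrow.
have -> : lsubmx (c *: u + v) = c *: lsubmx u + lsubmx v by apply/matrixP => i j; rewrite !mxE.
have -> : rsubmx (c *: u + v) = c *: rsubmx u + rsubmx v by apply/matrixP => i j; rewrite !mxE.
rewrite !linearD !linearZ /= !mulmxDl -!scalemxAl !linearD !linearZ /=.
by rewrite scale_row_mx add_row_mx.
Qed.

HB.instance Definition _ g := GRing.isLinear.Build F _ _ *:%R (conjrow g) (conjrow_lin g).

Lemma cl_conj (S : 'M[F]_n * 'M[F]_n -> Prop) (g : 'M[F]_n) :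
  (forall Q, S Q -> S (g *m Q.1 *m invmx g, g *m Q.2 *m invmx g)) ->
  forall P, zariski_closure S P ->
    zariski_closure S (g *m P.1 *m invmx g, g *m P.2 *m invmx g).
Proof.
move=> HS P HP.
apply: (cl_lin (phi := fun P => (g *m P.1 *m invmx g, g *m P.2 *m invmx g))
          (M := lin1_mx (conjrow g))) HS P HP => P i.
have -> : \row_j pair_coords P j = row_mx (mxvec P.1) (mxvec P.2).
  by apply/rowP => j; rewrite mxE.
by rewrite mul_rV_lin1 /= /conjrow row_mxKl row_mxKr !mxvecK.
Qed.

End Lin.

Lemma invmx_uniq (R : comUnitRingType) n (A B : 'M[R]_n) : A *m B = 1%:M -> invmx A = B.
Proof.
move=> AB; have [Au _] := mulmx1_unit AB.
by rewrite -[invmx A]mulmx1 -AB mulmxA mulVmx // mul1mx.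
Qed.

Lemma invmxM (R : comUnitRingType) n (A B : 'M[R]_n) : A \in unitmx -> B \in unitmx ->
  invmx (A *m B) = invmx B *m invmx A.
Proof.
move=> Au Bu; apply: invmx_uniq.
by rewrite mulmxA -(mulmxA A) mulmxV // mulmx1 mulmxV.
Qed.

Lemma Sgen_conj (F : fieldType) n p m (g : 'M[F]_n) : g \in unitmx ->
  forall Q, Sgen n p m Q -> Sgen n p m (g *m Q.1 *m invmx g, g *m Q.2 *m invmx g).
Proof.
move=> gu Q [a [B [h [H1 [H2 [H3 [hu ->]]]]]]].
exists a, B, (g *m h); split => //; split => //; split => //; split.
  by rewrite unitmx_mul gu hu.
by rewrite invmxM // !mulmxA.
Qed.
Section SgenDiag.
Variable F : fieldType.

Definition valid (p m : nat) (a : nat -> F) :=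
  (forall i, (i < p + m)%N -> a i != 0) /\
  (forall i j, (i < p + m)%N -> (j < p + m)%N -> i <> j -> a i != a j /\ a i != - a j).

Lemma Sgen_of_conj n p m (a : nat -> F) (g B : 'M[F]_n) :
  valid p m a -> g \in unitmx ->
  Zanti (g *m diag_mx (\row_(i < n) Zdiag p m a i) *m invmx g, B) ->
  Sgen n p m (g *m diag_mx (\row_(i < n) Zdiag p m a i) *m invmx g, B).
Proof.
move=> [va1 va2] gu HZ.
exists a, (invmx g *m B *m g), g; split => //; split => //.
set D := diag_mx _ in HZ *.
split; last first.
  by split => //; rewrite !mulmxA mulmxV // mul1mx mulmxK.
rewrite /Zanti /= in HZ *.
have : invmx g *m (g *m D *m invmx g *m B + B *m (g *m D *m invmx g)) *m g = 0.
  by rewrite HZ mulmx0 mul0mx.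
by rewrite mulmxDr mulmxDl !mulmxA mulVmx // mul1mx mulmxKV.
Qed.

Lemma Sgen_diag n p m (a : nat -> F) (f : 'I_n -> 'I_n) (finj : injective f)
  (d : 'rV[F]_n) (B : 'M[F]_n) :
  valid p m a -> (forall i, d 0 i = Zdiag p m a (f i)) ->
  Zanti (diag_mx d, B) -> Sgen n p m (diag_mx d, B).
Proof.
move=> va Hd HZ.
pose s : 'S_n := perm finj.
have ginv : invmx (perm_mx s : 'M[F]_n) = perm_mx s^-1.
  by apply: invmx_uniq; rewrite -perm_mxM mulgV perm_mx1.
have gu : (perm_mx s : 'M[F]_n) \in unitmx by apply: unitmx_perm.
have E : diag_mx d = perm_mx s *m diag_mx (\row_(i < n) Zdiag p m a i) *m invmx (perm_mx s).
  rewrite ginv -row_permE -col_permE; apply/matrixP => i j.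
  rewrite !mxE (inj_eq (@perm_inj _ s)) !permE Hd.
  by case: eqP => [->|] //.
by rewrite E; apply: Sgen_of_conj => //; rewrite -E.
Qed.

End SgenDiag.
Section Good.
Variable F : numFieldType.
Variables (p m1 m2 : nat) (a : F).
Hypothesis ha : a != 0.
Hypothesis hm : m1 = 0%N \/ m2 = 0%N.
Local Notation n := ((p + m1) + (p + m2))%N.
Local Notation m := (m1 + m2)%N.

Definition Adiag : 'M[F]_n := diag_mx (\row_(i < n) if (i < p + m1)%N then a else - a).

Definition Bgood (w : nat -> F) : 'M[F]_n :=
  block_mx 0 (pid_mx p) (block_mx (diag_mx (\row_(k < p) w k)) 0 0 0) 0.

Lemma Bgood_entry w (i j : 'I_n) : Bgood w i j =
  if ((i < p) && (j == p + m1 + i :> nat))%N then 1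
  else if ((p + m1 <= i < p + m1 + p) && (j == i - (p + m1) :> nat))%N then w (i - (p + m1))%N
  else 0.
Proof.
rewrite /Bgood.
case: (split_ordP i) => i' ->; case: (split_ordP j) => j' ->;
  rewrite ?block_mxEul ?block_mxEur ?block_mxEdl ?block_mxEdr /=;
  have := ltn_ord i'; have := ltn_ord j'.
- by move=> *; rewrite mxE; case: ifP => ?; [lia|]; case: ifP => ?; [lia|].
- move=> *; rewrite mxE (_ : ((i' == j' :> nat) && (i' < p)%N) = ((i' < p) && (p + m1 + j' == p + m1 + i' :> nat))%N); last by lia.
  by case: ifP => //; case: ifP => ?; [lia|].
- move=> *; case: ifP => ?; [lia|].
  case: (split_ordP i') => i'' Ei'; case: (split_ordP j') => j'' Ej'; rewrite Ei' Ej';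
  rewrite ?block_mxEul ?block_mxEur ?block_mxEdl ?block_mxEdr /= ?mxE;
  have := ltn_ord i''; have := ltn_ord j''.
  + move=> *; rewrite (_ : (p + m1 + i'' - (p + m1))%N = i''); last by lia.
    rewrite (_ : (_ && _) = (i'' == j'')); last by rewrite -val_eqE /=; lia.
    by case: (i'' == j'').
  + by move=> *; case: ifP => ?; [lia|].
  + by move=> *; case: ifP => ?; [lia|].
  + by move=> *; case: ifP => ?; [lia|].
- by move=> *; rewrite mxE; case: ifP => ?; [lia|]; case: ifP => ?; [lia|].
Qed.



Definition ee : F := if m1 == 0%N then - a else a.
Definition alpha (k : nat) : F := if (k < p)%N then a else ee.
Definition beta (w c : nat -> F) (k : nat) : F := if (k < p)%N then a * w k else c (k - p)%N.
Definition al (w c : nat -> F) (x : F) (k : nat) : F := alpha k + x * beta w c k.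

Definition dd (w c : nat -> F) (x : F) (k : nat) : F :=
  if (k < p)%N then a + x * (a * w k)
  else if (k < p + m1)%N then a + x * c (k - p)%N
  else if (k < p + m1 + p)%N then - (a + x * (a * w (k - (p + m1))%N))
  else - a + x * c (k - (p + m1 + p))%N.

Definition sg (k : nat) : nat :=
  if (k < p)%N then (2 * k)%N else if (k < p + m1)%N then (p + k)%N
  else if (k < p + m1 + p)%N then (2 * (k - (p + m1)) + 1)%N else k.

Lemma sg_lt (k : 'I_n) : (sg k < n)%N.
Proof. have := ltn_ord k; rewrite /sg; repeat case: ifP => ?; lia. Qed.

Definition sgo (k : 'I_n) : 'I_n := Ordinal (sg_lt k).

Lemma sgo_inj : injective sgo.
Proof.
move=> i j E; apply: val_inj; move: E => /(congr1 val) /=.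
have := ltn_ord i; have := ltn_ord j; move: hm.
rewrite /sg; repeat case: ifP => ?; lia.
Qed.

Lemma dd_sg w c x (k : 'I_n) : dd w c x k = Zdiag p m (al w c x) (sg k).
Proof.
have hk := ltn_ord k; rewrite /dd /Zdiag /sg /al /alpha /beta /ee.
case: (ltnP k p) => h1.
  simp_if; rewrite (_ : ((2 * k)./2 = k)%N) //; lia.
case: (ltnP k (p + m1)) => h2.
  simp_if; rewrite (_ : (p + (p + k - 2 * p) - p = k - p)%N) //; lia.
case: (ltnP k (p + m1 + p)) => h3.
  simp_if; rewrite (_ : ((2 * (k - (p + m1)) + 1)./2 = k - (p + m1))%N) //; lia.
simp_if; rewrite (_ : (p + (k - 2 * p) - p = k - (p + m1 + p))%N) //; lia.
Qed.


Lemma exists_N (L : seq F) : exists N, forall k, (N + k)%:R \notin L.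
Proof.
elim: L => [|l L [N HN]]; first by exists 0%N.
case: (classic (exists k, k%:R = l)) => [[k0 hk0]|hno].
  exists (maxn N k0.+1) => k; rewrite inE negb_or; apply/andP; split.
    by apply/eqP => E; rewrite -hk0 in E; move/eqP: E; rewrite eqr_nat => /eqP; lia.
  by rewrite (_ : (maxn N k0.+1 + k = N + (maxn N k0.+1 - N + k))%N) ?HN //; lia.
exists N => k; rewrite inE negb_or HN andbT; apply/eqP => E.
by apply: hno; exists (N + k)%N.
Qed.

Lemma two_neq0 (b : F) : b != 0 -> b + b != 0.
Proof. by move=> hb; rewrite -mulr2n mulrn_eq0 negb_or hb. Qed.

Lemma ee_neq0 : ee != 0.
Proof. by rewrite /ee; case: ifP; rewrite ?oppr_eq0. Qed.

Lemma al_cof w c :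
  (forall i j, (i < p)%N -> (j < p)%N -> i <> j -> w i != w j) ->
  (forall i j, c i = c j -> i = j) ->
  (forall k l, (l < p)%N -> c k != a * w l /\ c k != - (a * w l)) ->
  cof (fun x => valid p m (al w c x)).
Proof.
move=> hw hc hcw.
have H : cof (fun x => forall i j : 'I_(p + m),
   (((i : nat) <> j -> al w c x i - al w c x j != 0 /\ al w c x i + al w c x j != 0)
    /\ al w c x i != 0)).
  apply: cof_all => i; apply: cof_all => j.
  have hi := ltn_ord i; have hj := ltn_ord j.
  have nz : cof (fun x => al w c x i != 0).
    apply: cof_aff; apply/orP; left; rewrite /alpha; case: ifP => _ //; exact: ee_neq0.
  case: (eqVneq (i : nat) j) => [eij|nij].
    by apply: cof_imp nz => x hx; split => // /(_ eij).
  have hd : cof (fun x => al w c x i - al w c x j != 0).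
    apply: (cof_imp (P := fun x => (alpha i - alpha j) + x * (beta w c i - beta w c j) != 0)).
      by move=> x; rewrite /al (_ : alpha i + x * beta w c i - (alpha j + x * beta w c j) = alpha i - alpha j + x * (beta w c i - beta w c j)) //; ring.
    apply: cof_aff; rewrite /alpha /beta /ee.
    case: (ltnP i p) => hip; case: (ltnP j p) => hjp.
    - by rewrite -mulrBr mulf_neq0 ?orbT // subr_eq0 hw //; apply/eqP.
    - case: ifP => _; first by rewrite opprK two_neq0.
      by rewrite subrr eqxx /= subr_eq0 eq_sym; case: (hcw (j - p)%N i hip).
    - case: ifP => _; first by rewrite -opprD oppr_eq0 two_neq0.
      by rewrite subrr eqxx /= subr_eq0; case: (hcw (i - p)%N j hjp).
    - rewrite subrr eqxx /= subr_eq0; apply/eqP => /hc; lia.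
  have hs : cof (fun x => al w c x i + al w c x j != 0).
    apply: (cof_imp (P := fun x => (alpha i + alpha j) + x * (beta w c i + beta w c j) != 0)).
      by move=> x; rewrite /al (_ : alpha i + x * beta w c i + (alpha j + x * beta w c j) = alpha i + alpha j + x * (beta w c i + beta w c j)) //; ring.
    apply: cof_aff; rewrite /alpha /beta.
    case: (ltnP i p) => hip; case: (ltnP j p) => hjp.
    - by rewrite two_neq0.
    - rewrite /ee; case: ifP => _; last by rewrite two_neq0.
      rewrite subrr eqxx /= addrC addr_eq0; by case: (hcw (j - p)%N i hip) => _ ->.
    - rewrite /ee; case: ifP => _; last by rewrite two_neq0.
      rewrite addrC subrr eqxx /= addr_eq0; by case: (hcw (i - p)%N j hjp) => _ ->.
    - by rewrite two_neq0 ?ee_neq0.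
  apply: cof_imp (cofI nz (cofI hd hs)) => x [h1 [h2 h3]]; split => // _; split => //.
apply: cof_imp H => x H; split.
  by move=> i hi; case: (H (Ordinal hi) (Ordinal hi)).
move=> i j hi hj nij; case: (H (Ordinal hi) (Ordinal hj)) => /(_ nij) [h1 h2] _.
by rewrite -subr_eq0 h1 -addr_eq0 h2.
Qed.


Definition d1 (w c : nat -> F) : 'rV[F]_n := \row_(k < n)
  (if (k < p)%N then a * w k
   else if (k < p + m1)%N then c (k - p)%N
   else if (k < p + m1 + p)%N then - (a * w (k - (p + m1))%N)
   else c (k - (p + m1 + p))%N).

Lemma Aeq w c x : Adiag + x *: diag_mx (d1 w c) = diag_mx (\row_k dd w c x k).
Proof.
apply/matrixP => i j; rewrite !mxE; case: (eqVneq i j) => [_|_]; last by rewrite !mulr0n mulr0 addr0.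
rewrite !mulr1n /dd; have := ltn_ord i; move: hm => ? ?.
case: (ltnP i p) => ?; first by simp_if.
case: (ltnP i (p + m1)) => ?; first by simp_if.
case: (ltnP i (p + m1 + p)) => ?; first by simp_if; rewrite mulrN opprD.
by simp_if.
Qed.

Lemma Zanti_good w c x : Zanti (diag_mx (\row_k dd w c x k), Bgood w).
Proof.
have E := Bgood_entry w; move: (Bgood w) E => B E.
rewrite /Zanti /= mul_diag_mx mul_mx_diag; apply/matrixP => i j; rewrite !mxE E.
have := ltn_ord i; have := ltn_ord j; move=> ? ?.
case: ifP => H1.
  rewrite /dd; simp_if; rewrite (_ : (j - (p + m1) = i)%N); last by lia.
  by rewrite mulr1 mul1r subrr.
case: ifP => H2; last first.
  by rewrite mulr0 mul0r addr0.
rewrite /dd; simp_if; rewrite (_ : (j : nat) = (i - (p + m1))%N); last by lia.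
by rewrite mulrC -mulrDr mulrC addrC subrr mul0r.
Qed.

Lemma L_good w : (forall i j, (i < p)%N -> (j < p)%N -> i <> j -> w i != w j) ->
  zariski_closure (Sgen n p m) (Adiag, Bgood w).
Proof.
move=> hw.
have [N HN] := exists_N ([seq a * w l | l <- iota 0 p] ++ [seq - (a * w l) | l <- iota 0 p]).
pose c k : F := (N + k)%:R.
have hc i j : c i = c j -> i = j by move/eqP; rewrite eqr_nat => /eqP; lia.
have hcw k l : (l < p)%N -> c k != a * w l /\ c k != - (a * w l).
  move=> hl; have := HN k; rewrite mem_cat negb_or => /andP [h1 h2]; split; apply/eqP => E.
    by apply: (negP h1); apply/mapP; exists l; [rewrite mem_iota; lia | exact: E].
  by apply: (negP h2); apply/mapP; exists l; [rewrite mem_iota; lia | exact: E].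
apply: (curve_cl (P1 := (diag_mx (d1 w c), 0))).
apply: cof_imp (al_cof hw hc hcw) => x vx /=.
rewrite scaler0 addr0 Aeq => Z _ HS; apply: HS.
apply: (Sgen_diag (f := sgo) sgo_inj vx); last exact: Zanti_good.
by move=> i; rewrite mxE dd_sg.
Qed.

End Good.
Section Aux.
Variable F : fieldType.

Lemma char_poly_conj k (P M : 'M[F]_k) : P \in unitmx ->
  char_poly (P *m M *m invmx P) = char_poly M.
Proof.
move=> Pu; rewrite /char_poly /char_poly_mx.
set mP := map_mx polyC P; set mPi := map_mx polyC (invmx P).
have hPi : mP *m mPi = 1%:M by rewrite -map_mxM mulmxV // map_mx1.
have -> : 'X%:M - map_mx polyC (P *m M *m invmx P) = mP *m ('X%:M - map_mx polyC M) *m mPi.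
  rewrite !map_mxM mulmxBr mulmxBl mul_mx_scalar -scalemxAl hPi scalemx1.
  by [].
rewrite !det_mulmx mulrAC -det_mulmx hPi det1 mul1r //.
Qed.

End Aux.

Lemma uniq_map_inj (T U : eqType) (f : T -> U) s x y :
  uniq (map f s) -> x \in s -> y \in s -> f x = f y -> x = y.
Proof.
elim: s => //= z s IH /andP [nz u]; rewrite !inE => /predU1P [->|xs] /predU1P [->|ys] E //.
- by move: nz; rewrite E map_f.
- by move: nz; rewrite -E map_f.
- exact: IH.
Qed.

Section Aux2.
Variable F : numClosedFieldType.

Lemma schur_any k (M : 'M[F]_k) : exists U, U \in unitmx /\ is_trig_mx (U *m M *m invmx U).
Proof.
case: k M => [|k] M.
  by exists 1%:M; split; [exact: unitmx1 | apply/is_trig_mxP => -[]].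
have [P Pu HP] := Schur M (ltn0Sn k); have Pu' := unitarymx_unit Pu.
by exists P; split => //; rewrite -conjumx.
Qed.

Lemma trig_diag k (T : 'M[F]_k) : is_trig_mx T -> injective (fun i => T i i) ->
  exists V, V \in unitmx /\ exists w : 'rV_k,
    V *m T *m invmx V = diag_mx w /\ injective (fun i => w 0 i).
Proof.
case: k T => [|k] T trig inj.
  exists 1%:M; split; first exact: unitmx1.
  by exists 0; split; [apply/matrixP => -[] | move=> -[]].
have dT : diagonalizable T.
  apply/diagonalizableP; exists [seq T i i | i <- index_enum 'I_k.+1].
    by rewrite map_inj_uniq ?index_enum_uniq.
  by rewrite big_map -char_poly_trig // mxminpoly_dvd_char.
case: dT => P Pu HP.
have /diag_mxP [d Hd] : is_diag_mx (P *m T *m invmx P) by rewrite -conjumx.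
exists P; split => //; exists d; split => //.
have hc : char_poly (diag_mx d) = char_poly T by rewrite -Hd char_poly_conj.
rewrite !char_poly_trig ?diag_mx_is_trig // in hc.
have : perm_eq [seq (diag_mx d) i i | i <- index_enum 'I_k.+1]
               [seq T i i | i <- index_enum 'I_k.+1].
  by apply: prod_XsubC_eq; rewrite !big_map.
move/perm_uniq; rewrite (map_inj_uniq inj) index_enum_uniq => U.
move=> i j /= E; apply: (uniq_map_inj U); rewrite ?mem_index_enum //.
by rewrite !mxE !eqxx !mulr1n.
Qed.

End Aux2.
Section Norm.
Variable F : numClosedFieldType.
Variables (p m1 m2 : nat) (a : F).
Hypothesis ha : a != 0.
Hypothesis hm : m1 = 0%N \/ m2 = 0%N.
Local Notation n := (p + m1 + (p + m2))%N.
Local Notation Cl := (zariski_closure (Sgen n p (m1 + m2))).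
Local Notation A := (Adiag p m1 m2 a).

Lemma Adiag_block : A = block_mx (a%:M) 0 0 (- a%:M).
Proof.
apply/matrixP => i j; rewrite /Adiag.
case: (split_ordP i) => i' ->; case: (split_ordP j) => j' ->;
  rewrite ?block_mxEul ?block_mxEur ?block_mxEdl ?block_mxEdr !mxE /=;
  have := ltn_ord i'; have := ltn_ord j'; move=> ? ?.
- by rewrite ltn_ord (inj_eq (@lshift_inj _ _)).
- by rewrite ltn_ord (_ : (lshift _ i' == rshift _ j') = false) // -val_eqE /=; lia.
- rewrite (_ : (rshift _ i' == lshift _ j') = false); last by rewrite -val_eqE /=; lia.
  by rewrite mulr0n.
- by rewrite ifF ?(inj_eq (@rshift_inj _ _)) ?mulNrn //; lia.
Qed.

Lemma conj_scalar k (P : 'M[F]_k) c : P \in unitmx -> invmx P *m c%:M *m P = c%:M.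
Proof. by move=> Pu; rewrite mul_mx_scalar -scalemxAl mulVmx // scalemx1. Qed.

Lemma cl_blk (P : 'M[F]_(p + m1)) (Q : 'M[F]_(p + m2)) X Y :
  P \in unitmx -> Q \in unitmx ->
  Cl (A, block_mx 0 (P *m X *m invmx Q) (Q *m Y *m invmx P) 0) ->
  Cl (A, block_mx 0 X Y 0).
Proof.
move=> Pu Qu H.
pose g : 'M[F]_n := block_mx (invmx P) 0 0 (invmx Q).
have hg : g *m block_mx P 0 0 Q = 1%:M.
  rewrite /g mulmx_block !mulmx0 !mul0mx !addr0 !add0r !mulVmx //.
  by rewrite -scalar_mx_block.
have gu := (mulmx1_unit hg).1; have gi := invmx_uniq hg.
have := cl_conj (Sgen_conj gu) H; rewrite gi /= /g Adiag_block !mulmx_block.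
rewrite ?mulmx0 ?mul0mx ?addr0 ?add0r ?mulmx0 ?mul0mx ?addr0 ?add0r.
rewrite conj_scalar // mulmxN mulNmx conj_scalar //.
by rewrite !mulmxA !mulVmx // !mul1mx !mulmxKV.
Qed.

Lemma L_diagY (w : 'rV[F]_p) : injective (fun i => w 0 i) ->
  Cl (A, block_mx 0 (pid_mx p) (block_mx (diag_mx w) 0 0 0) 0).
Proof.
move=> winj.
pose wn k := \sum_(j < p | (j : nat) == k) w 0 j.
have wnE (j : 'I_p) : wn j = w 0 j.
  by rewrite /wn (big_pred1 j) // => i /=; rewrite val_eqE.
have := @L_good F p m1 m2 a ha hm wn _.
have -> : Bgood p m1 m2 wn = block_mx 0 (pid_mx p) (block_mx (diag_mx w) 0 0 0) 0.
  rewrite /Bgood; do 2!congr block_mx; congr diag_mx.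
  by apply/rowP => k; rewrite mxE wnE.
apply => i j hi hj nij.
rewrite (wnE (Ordinal hi)) (wnE (Ordinal hj)); apply/eqP => /winj /(congr1 val) /=.
exact: nij.
Qed.

Lemma mx_m0 (Z : 'M[F]_(m2, m1)) : Z = 0.
Proof.
apply/matrixP => i j; have := ltn_ord i; have := ltn_ord j.
move=> h1 h2; exfalso; lia.
Qed.

Lemma blk_diag_inv k1 k2 (U : 'M[F]_k1) (V : 'M[F]_k2) : U \in unitmx -> V \in unitmx ->
  block_mx U 0 0 V \in unitmx /\ invmx (block_mx U 0 0 V) = block_mx (invmx U) 0 0 (invmx V).
Proof.
move=> Uu Vu.
have h : block_mx U 0 0 V *m block_mx (invmx U) 0 0 (invmx V) = 1%:M.
  rewrite mulmx_block !mulmx0 !mul0mx !addr0 !add0r !mulmxV //.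
  by rewrite -scalar_mx_block.
by split; [exact: (mulmx1_unit h).1 | exact: invmx_uniq].
Qed.

Lemma pid_conj (U : 'M[F]_p) : U \in unitmx ->
  block_mx U 0 0 1%:M *m pid_mx p *m invmx (block_mx U 0 0 1%:M) = pid_mx p :> 'M_(p + m1, p + m2).
Proof.
move=> Uu; have [_ ->] := blk_diag_inv (k2 := m2) Uu (unitmx1 F m2).
rewrite invmx1 !pid_mx_block !mulmx_block ?mulmx0 ?mul0mx ?addr0 ?add0r ?mulmx0 ?mul0mx ?addr0 ?add0r.
by rewrite mulmx1 mulmxV.
Qed.

Lemma L_trigd (T : 'M[F]_p) (Y12 : 'M[F]_(p, m1)) (Y21 : 'M[F]_(m2, p)) (Y22 : 'M[F]_(m2, m1)) :
  is_trig_mx T -> (forall i, T i i != 0) -> injective (fun i => T i i) ->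
  Cl (A, block_mx 0 (pid_mx p) (block_mx T Y12 Y21 Y22) 0).
Proof.
move=> Ttrig Tnz Tinj.
have Tu : T \in unitmx by rewrite unitmxE unitfE det_trig //; apply/prodf_neq0 => i _.
pose K1 := invmx T *m Y12; pose K2 := - (Y21 *m invmx T).
have hP : block_mx 1%:M K1 0 1%:M *m block_mx 1%:M (- K1) 0 1%:M = 1%:M :> 'M[F]_(p + m1).
  rewrite mulmx_block !mulmx0 !mul0mx !mulmx1 !mul1mx !addr0 !add0r addNr.
  by rewrite -scalar_mx_block.
have hQ : block_mx 1%:M 0 K2 1%:M *m block_mx 1%:M 0 (- K2) 1%:M = 1%:M :> 'M[F]_(p + m2).
  rewrite mulmx_block !mulmx0 !mul0mx !mulmx1 !mul1mx !addr0 !add0r addrN.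
  by rewrite -scalar_mx_block.
apply: (cl_blk (P := block_mx 1%:M K1 0 1%:M) (Q := block_mx 1%:M 0 K2 1%:M)).
- exact: (mulmx1_unit hP).1.
- exact: (mulmx1_unit hQ).1.
rewrite (invmx_uniq hP) (invmx_uniq hQ).
have -> : block_mx 1%:M K1 0 1%:M *m pid_mx p *m block_mx 1%:M 0 (- K2) 1%:M = pid_mx p.
  rewrite !pid_mx_block !mulmx_block ?mulmx0 ?mul0mx ?mulmx1 ?mul1mx ?addr0 ?add0r.
  by rewrite ?mulmx0 ?mul0mx ?addr0 ?add0r.
have -> : block_mx 1%:M 0 K2 1%:M *m block_mx T Y12 Y21 Y22 *m block_mx 1%:M (- K1) 0 1%:M
          = block_mx T 0 0 0.
  rewrite !mulmx_block ?mulmx0 ?mul0mx ?mulmx1 ?mul1mx ?addr0 ?add0r.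
  rewrite [_ + (_ + Y22)]mx_m0 mulmxN /K1 /K2 mulmxA mulmxV // mul1mx addNr.
  by rewrite mulNmx -mulmxA mulVmx // mulmx1 addNr.
have [V [Vu [w [Vw winj]]]] := trig_diag Ttrig Tinj.
apply: (cl_blk (P := block_mx V 0 0 1%:M) (Q := block_mx V 0 0 1%:M)).
- exact: (blk_diag_inv Vu (unitmx1 F m1)).1.
- exact: (blk_diag_inv Vu (unitmx1 F m2)).1.
rewrite pid_conj //.
have [_ ->] := blk_diag_inv (k2 := m1) Vu (unitmx1 F m1).
rewrite !mulmx_block ?mulmx0 ?mul0mx ?mulmx1 ?mul1mx ?addr0 ?add0r ?mulmx0 ?mul0mx ?addr0 ?add0r.
rewrite Vw; exact: L_diagY.
Qed.

Lemma L_trig (T : 'M[F]_p) (Y12 : 'M[F]_(p, m1)) (Y21 : 'M[F]_(m2, p)) (Y22 : 'M[F]_(m2, m1)) :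
  is_trig_mx T -> Cl (A, block_mx 0 (pid_mx p) (block_mx T Y12 Y21 Y22) 0).
Proof.
move=> Ttrig.
pose D : 'M[F]_p := diag_mx (\row_(k < p) (k.+1)%:R).
apply: (curve_cl (P1 := (0, block_mx 0 0 (block_mx D 0 0 0) 0))).
have DE x (i : 'I_p) : (T + x *: D) i i = T i i + x * (i.+1)%:R.
  by rewrite !mxE eqxx mulr1n.
have cofT : cof (fun x => (forall i, (T + x *: D) i i != 0) /\
                          (forall i j : 'I_p, i != j -> (T + x *: D) i i - (T + x *: D) j j != 0)).
  apply: cofI.
    apply: cof_all => i; apply: (cof_imp (P := fun x => T i i + x * (i.+1)%:R != 0)).
      by move=> x; rewrite DE.
    by apply: cof_aff; rewrite pnatr_eq0 orbT.
  apply: cof_all => i; apply: cof_all => j.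
  case: (eqVneq i j) => [->|nij]; first by apply: cofT.
  apply: (cof_imp (P := fun x => (T i i - T j j) + x * ((i.+1)%:R - (j.+1)%:R) != 0)).
    move=> x H _; rewrite !DE.
    by rewrite (_ : T i i + x * (i.+1)%:R - (T j j + x * (j.+1)%:R) = T i i - T j j + x * ((i.+1)%:R - (j.+1)%:R)) //; ring.
  by apply: cof_aff; apply/orP; right; rewrite subr_eq0 eqr_nat eqSS val_eqE.
apply: cof_imp cofT => x [h1 h2] /=.
rewrite scaler0 addr0 scale_block_mx !scaler0 add_block_mx !addr0 scale_block_mx !scaler0.
rewrite add_block_mx !addr0.
apply: L_trigd => //.
- have /is_trig_mxP Tz := Ttrig.
  apply/is_trig_mxP => i j lt; rewrite !mxE Tz // add0r.
  by rewrite (_ : (i == j) = false) ?mulr0n ?mulr0 // -val_eqE /=; apply/negbTE; rewrite neq_ltn lt.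
- move=> i j E; apply/eqP; apply: contraT => nij.
  by have := h2 i j nij; rewrite E subrr eqxx.
Qed.

Lemma L_pid Y : Cl (A, block_mx 0 (pid_mx p) Y 0).
Proof.
rewrite -[Y]submxK.
have [U [Uu Ut]] := schur_any (ulsubmx Y).
apply: (cl_blk (P := block_mx U 0 0 1%:M) (Q := block_mx U 0 0 1%:M)).
- exact: (blk_diag_inv Uu (unitmx1 F m1)).1.
- exact: (blk_diag_inv Uu (unitmx1 F m2)).1.
rewrite pid_conj //.
have [_ ->] := blk_diag_inv (k2 := m1) Uu (unitmx1 F m1).
rewrite !mulmx_block ?mulmx0 ?mul0mx ?mulmx1 ?mul1mx ?addr0 ?add0r ?mulmx0 ?mul0mx ?addr0 ?add0r.
exact: L_trig.
Qed.

Lemma L_r r Y : (r <= p)%N -> Cl (A, block_mx 0 (pid_mx r) Y 0).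
Proof.
move=> rp.
apply: (curve_cl (P1 := (0, block_mx 0 (pid_mx p - pid_mx r) 0 0))).
apply: (cof_imp (P := fun x => 0 + x * 1 != 0)); last first.
  by apply: cof_aff; rewrite oner_eq0 orbT.
move=> x; rewrite add0r mulr1 => xn0 /=.
rewrite scaler0 addr0 scale_block_mx !scaler0 add_block_mx !addr0.
pose D : 'M[F]_(p + m1) := diag_mx (\row_(i < p + m1) if (i < r)%N then 1 else x^-1).
pose D' : 'M[F]_(p + m1) := diag_mx (\row_(i < p + m1) if (i < r)%N then 1 else x).
have hD : D *m D' = 1%:M.
  rewrite /D /D' mul_diag_mx; apply/matrixP => i j; rewrite !mxE.
  by case: ifP => _; case: (i == j); rewrite ?mul1r ?mulr1n ?mulr0n ?mulVf ?mulr0.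
have Du := (mulmx1_unit hD).1.
have hX : D *m (pid_mx r + x *: (pid_mx p - pid_mx r)) = pid_mx p :> 'M[F]_(p + m1, p + m2).
  rewrite /D mul_diag_mx; apply/matrixP => i j; rewrite !mxE.
  case: (ltnP i r) => ir.
    by rewrite mul1r (_ : (i < p)%N = true) ?andbT ?subrr ?mulr0 ?addr0 //; lia.
  by rewrite andbF add0r subr0 mulrA mulVf // mul1r.
apply: (cl_blk (P := D) (Q := 1%:M)) => //; first exact: unitmx1.
by rewrite invmx1 mulmx1 hX mul1mx; exact: L_pid.
Qed.

Lemma L_any X Y : Cl (A, block_mx 0 X Y 0).
Proof.
apply: (cl_blk (P := invmx (col_ebase X)) (Q := row_ebase X)).
- by rewrite unitmx_inv col_ebase_unit.
- exact: row_ebase_unit.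
rewrite -{2}(mulmx_ebase X) !mulmxA mulVmx ?col_ebase_unit // mul1mx.
rewrite mulmxK ?row_ebase_unit //.
apply: L_r; have := rank_leq_row X; have := rank_leq_col X; lia.
Qed.

Lemma L_core B : A *m B + B *m A = 0 -> Cl (A, B).
Proof.
move=> HB.
have E (i j : 'I_n) : (if (i < p + m1)%N then a else - a) * B i j + B i j * (if (j < p + m1)%N then a else - a) = 0.
  by move/matrixP: HB => /(_ i j); rewrite /Adiag mul_diag_mx mul_mx_diag !mxE.
have ul : ulsubmx B = 0.
  apply/matrixP => i j; rewrite !mxE; have := E (lshift _ i) (lshift _ j); rewrite /= !ltn_ord.
  by rewrite mulrC -mulrDr => /eqP; rewrite mulf_eq0 (negbTE (two_neq0 ha)) orbF => /eqP.
have dr : drsubmx B = 0.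
  apply/matrixP => i j; rewrite !mxE; have := E (rshift _ i) (rshift _ j); rewrite /=.
  rewrite !ifF; try by lia.
  rewrite mulrC -mulrDr => /eqP; rewrite mulf_eq0 -opprD oppr_eq0 (negbTE (two_neq0 ha)) orbF.
  by move/eqP.
by rewrite -[B]submxK ul dr; exact: L_any.
Qed.

Lemma L_rank B : A *m B + B *m A = 0 -> (\rank B <= 2 * p)%N.
Proof.
move=> HB.
have E (i j : 'I_n) : (if (i < p + m1)%N then a else - a) * B i j + B i j * (if (j < p + m1)%N then a else - a) = 0.
  by move/matrixP: HB => /(_ i j); rewrite /Adiag mul_diag_mx mul_mx_diag !mxE.
have ul : ulsubmx B = 0.
  apply/matrixP => i j; rewrite !mxE; have := E (lshift _ i) (lshift _ j); rewrite /= !ltn_ord.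
  by rewrite mulrC -mulrDr => /eqP; rewrite mulf_eq0 (negbTE (two_neq0 ha)) orbF => /eqP.
have dr : drsubmx B = 0.
  apply/matrixP => i j; rewrite !mxE; have := E (rshift _ i) (rshift _ j); rewrite /=.
  rewrite !ifF; try by lia.
  rewrite mulrC -mulrDr => /eqP; rewrite mulf_eq0 -opprD oppr_eq0 (negbTE (two_neq0 ha)) orbF.
  by move/eqP.
rewrite -[B]submxK ul dr.
set X := ursubmx B; set Y := dlsubmx B.
have -> : block_mx 0 X Y 0 = block_mx 0 X 0 0 + block_mx 0 0 Y 0 :> 'M[F]_n.
  by rewrite add_block_mx !addr0 !add0r.
have hX : block_mx 0 X 0 0 = col_mx 1%:M 0 *m X *m row_mx 0 1%:M :> 'M[F]_n.
  by rewrite !(mul_col_mx, mul_mx_row, mul1mx, mul0mx, mulmx0, mulmx1, row_mx0) block_mxEh col_mx0.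
have hY : block_mx 0 0 Y 0 = col_mx 0 1%:M *m Y *m row_mx 1%:M 0 :> 'M[F]_n.
  by rewrite !(mul_col_mx, mul_mx_row, mul1mx, mul0mx, mulmx0, mulmx1, row_mx0) block_mxEh col_mx0.
apply: leq_trans (mxrank_add _ _) _; rewrite hX hY mul2n -addnn.
have rX : (\rank X <= p)%N by have := rank_leq_row X; have := rank_leq_col X; lia.
have rY : (\rank Y <= p)%N by have := rank_leq_row Y; have := rank_leq_col Y; lia.
apply: leq_add.
  by apply: leq_trans (mxrankM_maxl _ _) _; apply: leq_trans (mxrankM_maxr _ _) _.
by apply: leq_trans (mxrankM_maxl _ _) _; apply: leq_trans (mxrankM_maxr _ _) _.
Qed.

End Norm.

Unset Implicit Arguments.

Theorem lemma4p1 (R : realType) (s t : nat) (a : R[i]) :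
  a != 0 -> (0 < s + t)%N ->
  forall B : 'M[R[i]]_(s + t),
    let A : 'M[R[i]]_(s + t) :=
      diag_mx (\row_(i < s + t) (if (i < s)%N then a else - a)) in
    A *m B + B *m A = 0 ->
    (\rank B <= 2 * minn s t)%N /\
    Zpmr (s + t) (minn s t) (maxn s t - minn s t) 0 (A, B).
Proof.
move=> ha _.
have [p [m1 [m2 [hs [ht hm]]]]] : exists p m1 m2, s = (p + m1)%N /\ t = (p + m2)%N /\ (m1 = 0 \/ m2 = 0)%N.
  case: (leqP s t) => h.
    by exists s, 0%N, (t - s)%N; split; [|split]; lia.
  by exists t, (s - t)%N, 0%N; split; [|split]; lia.
subst s t => B A HB.
have hmin : minn (p + m1) (p + m2) = p by lia.
have hmax : (maxn (p + m1) (p + m2) - minn (p + m1) (p + m2))%N = (m1 + m2)%N by lia.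
rewrite hmax hmin; split.
  exact: (L_rank ha hm HB).
split; first by lia.
split; first exact: HB.
exact: (L_core ha hm HB).
Qed.
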